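(* Let $k$ be an algebraically closed field of characteristic $2$, $g = x^2+y^2z+yz^2+xyz$, $m\ge 5$, $R_m = k[x_0,\dots,x_m,y_0,\dots,y_m,z_0,\dots,z_m]$, $(\mathbb{A}^3)_m=\mathrm{Spec}\,R_m$, and define $g^{(j)}\in R_m$ by $g(\sum_{i=0}^m x_it^i,\sum_{i=0}^m y_it^i,\sum_{i=0}^m z_it^i)=\sum_{j=0}^m g^{(j)}t^j$ in $R_m[t]/\langle t^{m+1}\rangle$. Define $I_m^0 = \langle x_0,x_1,x_2,y_0,y_1,z_0,z_1\rangle + \langle g^{(0)},\dots,g^{(m)}\rangle$, $I_m^1 = J_m^1 (R_m)_{z_1}\cap R_m$, $I_m^2 = J_m^2 (R_m)_{y_1}\cap R_m$, $I_m^3 = J_m^3 (R_m)_{y_1}\cap R_m$, where $J_m^1 = \langle x_0,x_1,y_0,y_1,z_0\rangle + \langle g^{(0)},\dots,g^{(m)}\rangle$, $J_m^2 = \langle x_0,x_1,y_0,z_0,z_1\rangle + \langle g^{(0)},\dots,g^{(m)}\rangle$, $J_m^3 = \langle x_0,x_1,y_0,z_0,y_1+z_1\rangle + \langle g^{(0)},\dots,g^{(m)}\rangle$, and let $Z_m^i=\mathbf{V}(I_m^i)$ for $i=0,1,2,3$. Let $\psi_1,\psi_2$ be the automorphisms of $(\mathbb{A}^3)_m$ corresponding to the $k$-algebra automorphisms $\varphi_1,\varphi_2$ of $R_m$ given by $\varphi_1: x_i\mapsto x_i,\ y_i\mapsto z_i,\ z_i\mapsto y_i$ and $\varphi_2: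 x_i\mapsto x_i,\ y_i\mapsto y_i,\ z_i\mapsto x_i+y_i+z_i$ (for all $i$). Then (1) $\psi_1(Z_m^0)=Z_m^0$, $\psi_1(Z_m^1)=Z_m^2$, $\psi_1(Z_m^2)=Z_m^1$, $\psi_1(Z_m^3)=Z_m^3$; (2) $\psi_2(Z_m^0)=Z_m^0$, $\psi_2(Z_m^1)=Z_m^1$, $\psi_2(Z_m^2)=Z_m^3$, $\psi_2(Z_m^3)=Z_m^2$.
   Context: $(R_m)_h$ is the localization at powers of $h$, $J(R_m)_h\cap R_m$ the preimage in $R_m$ of the extended ideal, and $\mathbf{V}(\cdot)$ the zero set in $(\mathbb{A}^3)_m$. *)

(* Defs.v *)
From HB Require Import structures.
From mathcomp Require Import all_boot all_order all_algebra.
From mathcomp Require Import mpoly.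
Set Implicit Arguments. Unset Strict Implicit. Unset Printing Implicit Defensive.
Import Order.TTheory GRing.Theory.
Local Open Scope ring_scope.

Section Jets.
Variables (k : fieldType) (m : nat).

(* R_m = k[x_0..x_m, y_0..y_m, z_0..z_m]; variable number
   j < 3(m+1) is x_j if j < m+1, y_(j-(m+1)) if m+1 <= j < 2(m+1),
   z_(j-2(m+1)) otherwise. *)
Definition nv := (3 * m.+1)%N.
Definition Rm := {mpoly k[nv]}.

Definition xv (i : nat) : Rm := 'X_(inord i).
Definition yv (i : nat) : Rm := 'X_(inord (m.+1 + i)).
Definition zv (i : nat) : Rm := 'X_(inord (2 * m.+1 + i)).

Definition vblock (j : 'I_nv) : nat := (j %/ m.+1)%N.
Definition vpos (j : 'I_nv) : nat := (j %% m.+1)%N.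

Definition arcx : {poly Rm} := \sum_(i < m.+1) (xv i)%:P * 'X^i.
Definition arcy : {poly Rm} := \sum_(i < m.+1) (yv i)%:P * 'X^i.
Definition arcz : {poly Rm} := \sum_(i < m.+1) (zv i)%:P * 'X^i.

(* g = x^2 + y^2 z + y z^2 + x y z evaluated on the arcs; g^(j) is the
   coefficient of t^j (for j <= m this is the same in R_m[t]/<t^(m+1)>). *)
Definition garc : {poly Rm} :=
  arcx ^+ 2 + arcy ^+ 2 * arcz + arcy * arcz ^+ 2 + arcx * arcy * arcz.
Definition gj (j : nat) : Rm := garc`_j.
Definition gjs : seq Rm := [seq gj j | j <- iota 0 m.+1].

Definition in_ideal (gs : seq Rm) (f : Rm) : Prop :=
  exists c : 'I_(size gs) -> Rm, f = \sum_(i < size gs) c i * gs`_i.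

(* J R_h ∩ R : f/1 ∈ J R_h  iff  h^n f ∈ J for some n *)
Definition in_sat (gs : seq Rm) (h : Rm) (f : Rm) : Prop :=
  exists n : nat, in_ideal gs (h ^+ n * f).

Definition I0 : Rm -> Prop :=
  in_ideal ([:: xv 0; xv 1; xv 2; yv 0; yv 1; zv 0; zv 1] ++ gjs).
Definition J1 : seq Rm := [:: xv 0; xv 1; yv 0; yv 1; zv 0] ++ gjs.
Definition J2 : seq Rm := [:: xv 0; xv 1; yv 0; zv 0; zv 1] ++ gjs.
Definition J3 : seq Rm := [:: xv 0; xv 1; yv 0; zv 0; yv 1 + zv 1] ++ gjs.
Definition I1 : Rm -> Prop := in_sat J1 (zv 1).
Definition I2 : Rm -> Prop := in_sat J2 (yv 1).
Definition I3 : Rm -> Prop := in_sat J3 (yv 1).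

(* (k-rational = closed) points of (A^3)_m = Spec R_m *)
Definition point := 'I_nv -> k.
Definition Vset (I : Rm -> Prop) : point -> Prop :=
  fun p => forall f, I f -> f.@[p] = 0.

Definition Z0 := Vset I0.
Definition Z1 := Vset I1.
Definition Z2 := Vset I2.
Definition Z3 := Vset I3.

Definition alg_map (img : 'I_nv -> Rm) (f : Rm) : Rm :=
  f \mPo [tuple img j | j < nv].

Definition phi1_img (j : 'I_nv) : Rm :=
  match vblock j with
  | 0%N => 'X_j
  | 1%N => zv (vpos j)
  | _ => yv (vpos j)
  end.
Definition phi2_img (j : 'I_nv) : Rm :=
  match vblock j with
  | 0%N | 1%N => 'X_j
  | _ => xv (vpos j) + yv (vpos j) + zv (vpos j)
  end.

Definition phi1 := alg_map phi1_img.
Definition phi2 := alg_map phi2_img.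

(* Spec of an algebra map on closed points: the point p (evaluation
   ev_p : R_m -> k) goes to ev_p \o phi, whose coordinates are
   (phi X_j)(p). *)
Definition spec_map (img : 'I_nv -> Rm) (p : point) : point :=
  fun j => (img j).@[p].

Definition psi1 := spec_map phi1_img.
Definition psi2 := spec_map phi2_img.

End Jets.

Definition image_set (A B : Type) (f : A -> B) (S : A -> Prop) : B -> Prop :=
  fun b => exists2 a, S a & b = f a.
Definition same_set (A : Type) (S T : A -> Prop) : Prop :=
  forall a, S a <-> T a.

(* Main.v *)
Require Import Defs.
From HB Require Import structures.
From mathcomp Require Import all_boot all_order all_algebra.
From mathcomp Require Import mpoly.
From mathcomp Require Import zify ring.
From Stdlib Require Import FunctionalExtensionality.
Set Implicit Arguments. Unset Strict Implicit. Unset Printing Implicit Defensive.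
Import GRing.Theory.
Local Open Scope ring_scope.


Lemma ideal0 (k : fieldType) (m : nat) (gs : seq (Rm k m)) : in_ideal gs 0.
Proof. by exists (fun _ => 0); rewrite big1 // => i _; rewrite mul0r. Qed.

Lemma idealD (k : fieldType) (m : nat) (gs : seq (Rm k m)) f g :
  in_ideal gs f -> in_ideal gs g -> in_ideal gs (f + g).
Proof.
move=> [c ->] [d ->]; exists (fun i => c i + d i).
by rewrite -big_split; apply: eq_bigr => i _; rewrite mulrDl.
Qed.

Lemma idealM (k : fieldType) (m : nat) (gs : seq (Rm k m)) a f :
  in_ideal gs f -> in_ideal gs (a * f).
Proof.
move=> [c ->]; exists (fun i => a * c i).
by rewrite mulr_sumr; apply: eq_bigr => i _; rewrite mulrA.
Qed.

Lemma idealN (k : fieldType) (m : nat) (gs : seq (Rm k m)) f :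
  in_ideal gs f -> in_ideal gs (- f).
Proof. by move=> h; rewrite -mulN1r; apply: idealM. Qed.

Lemma idealB (k : fieldType) (m : nat) (gs : seq (Rm k m)) f g :
  in_ideal gs f -> in_ideal gs g -> in_ideal gs (f - g).
Proof. by move=> hf hg; apply: idealD => //; apply: idealN. Qed.

Lemma ideal_nth (k : fieldType) (m : nat) (gs : seq (Rm k m)) i :
  (i < size gs)%N -> in_ideal gs gs`_i.
Proof.
move=> hi; exists (fun j => if (j : nat) == i then 1 else 0).
rewrite (bigD1 (Ordinal hi)) //= eqxx mul1r big1 ?addr0 // => j /negbTE.
by rewrite -(inj_eq val_inj) /= => ->; rewrite mul0r.
Qed.

Lemma ideal_gen (k : fieldType) (m : nat) (gs : seq (Rm k m)) x :
  x \in gs -> in_ideal gs x.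
Proof. by move=> hx; rewrite -(nth_index 0 hx); apply: ideal_nth; rewrite index_mem. Qed.

Lemma alg_mapE (k : fieldType) (m : nat) (img : 'I_(nv m) -> Rm k m) f :
  alg_map img f = comp_mpoly [tuple img j | j < nv m] f.
Proof. by []. Qed.

Lemma ideal_map (k : fieldType) (m : nat) (img : 'I_(nv m) -> Rm k m)
   (gs gs' : seq (Rm k m)) f :
  in_ideal gs f -> (forall g, g \in gs -> in_ideal gs' (alg_map img g)) ->
  in_ideal gs' (alg_map img f).
Proof.
move=> [c ->] H; rewrite alg_mapE rmorph_sum /=.
apply: (big_ind (in_ideal gs')); [exact: ideal0| exact: idealD|] => i _.
rewrite rmorphM /=; apply: idealM; rewrite -alg_mapE; apply: H.
by apply: mem_nth.
Qed.

Lemma sat_map (k : fieldType) (m : nat) (img : 'I_(nv m) -> Rm k m)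
   (gs gs' : seq (Rm k m)) h h' f :
  in_sat gs h f -> (forall g, g \in gs -> in_ideal gs' (alg_map img g)) ->
  in_ideal gs' (alg_map img h - h') ->
  in_sat gs' h' (alg_map img f).
Proof.
move=> [n hn] H hh; exists n.
have := ideal_map hn H; rewrite alg_mapE rmorphM rmorphXn /= -!alg_mapE => h1.
have -> : h' ^+ n * alg_map img f = (alg_map img h) ^+ n * alg_map img f
   - (alg_map img h ^+ n - h' ^+ n) * alg_map img f.
  by move: (alg_map img h ^+ n) (h' ^+ n) (alg_map img f) => a b c; ring.
apply: idealB => //; rewrite subrXX -mulrA mulrC; exact: idealM.
Qed.

Lemma eval_spec (k : fieldType) (m : nat) (img : 'I_(nv m) -> Rm k m) p f :
  f.@[spec_map img p] = (alg_map img f).@[p].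
Proof.
rewrite alg_mapE comp_mpoly_meval; apply: meval_eq => i.
by rewrite tnth_mktuple.
Qed.

Lemma transfer (k : fieldType) (m : nat) (img : 'I_(nv m) -> Rm k m)
   (I I' : Rm k m -> Prop) :
  (forall p, spec_map img (spec_map img p) = p) ->
  (forall f, I f -> I' (alg_map img f)) ->
  (forall f, I' f -> I (alg_map img f)) ->
  same_set (image_set (spec_map img) (Vset I)) (Vset I').
Proof.
move=> inv h1 h2 q; split.
  by move=> [p Vp ->] f /h2 /Vp; rewrite eval_spec.
move=> Vq; exists (spec_map img q); last by rewrite inv.
by move=> f /h1 /Vq; rewrite eval_spec.
Qed.


Lemma inordV (m : nat) (i : nat) : (i < nv m)%N -> ((inord i : 'I_(nv m)) : nat) = i.
Proof. by move=> h; rewrite inordK. Qed.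

Lemma blk_gen (m b i : nat) : (b < 3)%N -> (i < m.+1)%N ->
  vblock (inord (b * m.+1 + i) : 'I_(nv m)) = b /\ vpos (inord (b * m.+1 + i) : 'I_(nv m)) = i.
Proof.
move=> hb h; rewrite /vblock /vpos inordV; last by rewrite /nv; nia.
by rewrite divnMDl // modnMDl divn_small ?modn_small ?addn0.
Qed.
Lemma blk_x (m i : nat) : (i < m.+1)%N ->
  vblock (inord i : 'I_(nv m)) = 0%N /\ vpos (inord i : 'I_(nv m)) = i.
Proof. by move=> h; have := @blk_gen m 0 i isT h; rewrite mul0n add0n. Qed.
Lemma blk_y (m i : nat) : (i < m.+1)%N ->
  vblock (inord (m.+1 + i) : 'I_(nv m)) = 1%N /\ vpos (inord (m.+1 + i) : 'I_(nv m)) = i.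
Proof. by move=> h; have := @blk_gen m 1 i isT h; rewrite mul1n. Qed.
Lemma blk_z (m i : nat) : (i < m.+1)%N ->
  vblock (inord (2 * m.+1 + i) : 'I_(nv m)) = 2%N /\ vpos (inord (2 * m.+1 + i) : 'I_(nv m)) = i.
Proof. by move=> h; have := @blk_gen m 2 i isT h. Qed.

Lemma var_dec (m : nat) (j : 'I_(nv m)) :
  (vblock j < 3)%N /\ (vpos j < m.+1)%N /\ j = inord (vblock j * m.+1 + vpos j) :> 'I_(nv m).
Proof.
have hj := ltn_ord j.
split; first by rewrite /vblock ltn_divLR //; move: hj; rewrite /nv mulnC.
split; first by rewrite /vpos ltn_mod.
apply: val_inj => /=; rewrite inordV /vblock /vpos -?divn_eq //.
Qed.

Lemma alg_mapX (k : fieldType) (m : nat) (img : 'I_(nv m) -> Rm k m) j :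
  alg_map img 'X_j = img j.
Proof. by rewrite alg_mapE comp_mpolyXU -(tnth_nth 0) tnth_mktuple. Qed.

Lemma two0 (k : fieldType) (m : nat) : (2 \in [pchar k])%N -> (2%:R : Rm k m) = 0.
Proof. by move=> h; rewrite -mpolyC_nat (pcharf0 h). Qed.

Lemma addxx (k : fieldType) (m : nat) (x : Rm k m) : (2 \in [pchar k])%N -> x + x = 0.
Proof. by move=> h; rewrite -mulr2n -mulr_natr two0 // mulr0. Qed.


Lemma phi1_x (k : fieldType) (m i : nat) : (i < m.+1)%N -> phi1 (xv k m i) = xv k m i.
Proof. by move=> h; rewrite /phi1 alg_mapX /phi1_img; case: (blk_x h) => ->. Qed.
Lemma phi1_y (k : fieldType) (m i : nat) : (i < m.+1)%N -> phi1 (yv k m i) = zv k m i.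
Proof. by move=> h; rewrite /phi1 alg_mapX /phi1_img; case: (blk_y h) => -> ->. Qed.
Lemma phi1_z (k : fieldType) (m i : nat) : (i < m.+1)%N -> phi1 (zv k m i) = yv k m i.
Proof. by move=> h; rewrite /phi1 alg_mapX /phi1_img; case: (blk_z h) => -> ->. Qed.
Lemma phi2_x (k : fieldType) (m i : nat) : (i < m.+1)%N -> phi2 (xv k m i) = xv k m i.
Proof. by move=> h; rewrite /phi2 alg_mapX /phi2_img; case: (blk_x h) => ->. Qed.
Lemma phi2_y (k : fieldType) (m i : nat) : (i < m.+1)%N -> phi2 (yv k m i) = yv k m i.
Proof. by move=> h; rewrite /phi2 alg_mapX /phi2_img; case: (blk_y h) => ->. Qed.
Lemma phi2_z (k : fieldType) (m i : nat) : (i < m.+1)%N ->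
  phi2 (zv k m i) = xv k m i + yv k m i + zv k m i.
Proof. by move=> h; rewrite /phi2 alg_mapX /phi2_img; case: (blk_z h) => -> ->. Qed.

Lemma alg_map_coef (k : fieldType) (m : nat) (img : 'I_(nv m) -> Rm k m) (p : {poly Rm k m}) j :
  alg_map img p`_j = (map_poly (comp_mpoly [tuple img j | j < nv m]) p)`_j.
Proof. by rewrite coef_map. Qed.

Lemma map_arc (k : fieldType) (m : nat) (img : 'I_(nv m) -> Rm k m) (a f : nat -> Rm k m) :
  (forall i, (i < m.+1)%N -> alg_map img (a i) = f i) ->
  map_poly (comp_mpoly [tuple img j | j < nv m]) (\sum_(i < m.+1) (a i)%:P * 'X^i)
  = \sum_(i < m.+1) (f i)%:P * 'X^i.
Proof.
move=> H; rewrite rmorph_sum; apply: eq_bigr => i _.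
by rewrite rmorphM /= map_polyC map_polyXn /= -alg_mapE H.
Qed.

Lemma gform_sym (R : comNzRingType) (f : {rmorphism R -> R}) (x y z : R) :
  f x = x -> f y = z -> f z = y ->
  f (x ^+ 2 + y ^+ 2 * z + y * z ^+ 2 + x * y * z) =
  x ^+ 2 + y ^+ 2 * z + y * z ^+ 2 + x * y * z.
Proof. by move=> hx hy hz; rewrite !rmorphD !rmorphXn !rmorphM hx hy hz; ring. Qed.

Lemma gform_2 (R : comNzRingType) (f : {rmorphism R -> R}) (x y z : R) :
  (2%:R : R) = 0 ->
  f x = x -> f y = y -> f z = x + y + z ->
  f (x ^+ 2 + y ^+ 2 * z + y * z ^+ 2 + x * y * z) =
  x ^+ 2 + y ^+ 2 * z + y * z ^+ 2 + x * y * z.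
Proof.
move=> P2 hx hy hz; rewrite !rmorphD !rmorphXn !rmorphM hx hy hz.
have -> : x ^+ 2 + y ^+ 2 * (x + y + z) + y * (x + y + z) ^+ 2 + x * y * (x + y + z) =
   x ^+ 2 + y ^+ 2 * z + y * z ^+ 2 + x * y * z
   + 2%:R * (y^+3 + x^+2 * y + 2%:R * x * y^+2 + x*y*z + y^+2 * z) by ring.
by rewrite P2 mul0r addr0.
Qed.

Lemma phi1_g (k : fieldType) (m j : nat) : phi1 (gj k m j) = gj k m j.
Proof.
rewrite /gj /phi1 alg_map_coef; congr (nth 0 _ j); rewrite /garc.
rewrite gform_sym //.
- by apply: map_arc; exact: phi1_x.
- by apply: map_arc; exact: phi1_y.
- by apply: map_arc; exact: phi1_z.
Qed.

Lemma phi2_g (k : fieldType) (m j : nat) : (2 \in [pchar k])%N -> phi2 (gj k m j) = gj k m j.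
Proof.
move=> h2; rewrite /gj /phi2 alg_map_coef; congr (nth 0 _ j); rewrite /garc.
rewrite gform_2 //.
- by rewrite -(rmorph_nat (@polyC _)) two0 // polyC0.
- by apply: map_arc; exact: phi2_x.
- by apply: map_arc; exact: phi2_y.
- have -> : arcx k m + arcy k m + arcz k m =
     \sum_(i < m.+1) (xv k m i + yv k m i + zv k m i)%:P * 'X^i.
    by rewrite /arcx /arcy /arcz -!big_split; apply: eq_bigr => i _; rewrite !polyCD !mulrDl.
  by apply: (map_arc (a := zv k m) (f := fun i => xv k m i + yv k m i + zv k m i)) => i hi;
     exact: phi2_z.
Qed.


Lemma gen_at (k : fieldType) (m : nat) (L s : seq (Rm k m)) i :
  (i < size L)%N -> in_ideal (L ++ s) (nth 0 L i).
Proof.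
move=> h; have -> : nth 0 L i = nth 0 (L ++ s) i by rewrite nth_cat h.
by apply: ideal_nth; rewrite size_cat; apply: leq_trans (leq_addr _ _).
Qed.

Ltac gen n := apply: (@gen_at _ _ _ _ n); done.

Lemma alg_mapD (k : fieldType) (m : nat) (img : 'I_(nv m) -> Rm k m) a b :
  alg_map img (a + b) = alg_map img a + alg_map img b.
Proof. by rewrite !alg_mapE rmorphD. Qed.

Lemma forall_cons (T : eqType) (P : T -> Prop) a s :
  P a -> (forall g, g \in s -> P g) -> forall g, g \in a :: s -> P g.
Proof. by move=> ha hs g; rewrite in_cons => /predU1P [->|/hs]. Qed.

Lemma forall_nil (T : eqType) (P : T -> Prop) : forall g, g \in [::] -> P g.
Proof. by []. Qed.

Lemma gens_ok (k : fieldType) (m : nat) (img : 'I_(nv m) -> Rm k m) L L' :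
  (forall j, alg_map img (gj k m j) = gj k m j) ->
  (forall g, g \in L -> in_ideal (L' ++ gjs k m) (alg_map img g)) ->
  forall g, g \in L ++ gjs k m -> in_ideal (L' ++ gjs k m) (alg_map img g).
Proof.
move=> hg H g; rewrite mem_cat => /orP [/H //|/mapP [j hj ->]].
rewrite hg; apply: ideal_gen; rewrite mem_cat; apply/orP; right.
exact: map_f.
Qed.

Ltac splitl := first [ exact: forall_nil | apply: forall_cons; [ | splitl ] ].
Ltac g1 lem n := rewrite lem; [gen n | lia].
Ltac gens := apply: gens_ok; [| splitl].

Lemma a1x (k : fieldType) (m i : nat) : (i < m.+1)%N -> alg_map (@phi1_img k m) (xv k m i) = xv k m i.
Proof. exact: phi1_x. Qed.
Lemma a1y (k : fieldType) (m i : nat) : (i < m.+1)%N -> alg_map (@phi1_img k m) (yv k m i) = zv k m i.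
Proof. exact: phi1_y. Qed.
Lemma a1z (k : fieldType) (m i : nat) : (i < m.+1)%N -> alg_map (@phi1_img k m) (zv k m i) = yv k m i.
Proof. exact: phi1_z. Qed.
Lemma a2x (k : fieldType) (m i : nat) : (i < m.+1)%N -> alg_map (@phi2_img k m) (xv k m i) = xv k m i.
Proof. exact: phi2_x. Qed.
Lemma a2y (k : fieldType) (m i : nat) : (i < m.+1)%N -> alg_map (@phi2_img k m) (yv k m i) = yv k m i.
Proof. exact: phi2_y. Qed.
Lemma a2z (k : fieldType) (m i : nat) : (i < m.+1)%N ->
  alg_map (@phi2_img k m) (zv k m i) = xv k m i + yv k m i + zv k m i.
Proof. exact: phi2_z. Qed.
Lemma a1g (k : fieldType) (m j : nat) : alg_map (@phi1_img k m) (gj k m j) = gj k m j.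
Proof. exact: phi1_g. Qed.
Lemma a2g (k : fieldType) (m j : nat) : (2 \in [pchar k])%N ->
  alg_map (@phi2_img k m) (gj k m j) = gj k m j.
Proof. exact: phi2_g. Qed.

Lemma T1_00 (k : fieldType) (m : nat) : (5 <= m)%N ->
  forall f, I0 f -> I0 (alg_map (@phi1_img k m) f).
Proof.
move=> hm f hf; apply: (ideal_map hf); gens; first exact: a1g.
- g1 a1x 0%N.
- g1 a1x 1%N.
- g1 a1x 2%N.
- g1 a1y 5%N.
- g1 a1y 6%N.
- g1 a1z 3%N.
- g1 a1z 4%N.
Qed.

Lemma oppx (k : fieldType) (m : nat) (x : Rm k m) : (2 \in [pchar k])%N -> - x = x.
Proof. by move=> h; apply/eqP; rewrite eq_sym -subr_eq0 opprK addxx. Qed.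

Ltac gsum3 a b c := apply: idealD; [apply: idealD; [gen a | gen b] | gen c].
Ltac gsum2 a b := apply: idealD; [gen a | gen b].

Lemma T1_12 (k : fieldType) (m : nat) : (5 <= m)%N ->
  forall f, I1 f -> I2 (alg_map (@phi1_img k m) f).
Proof.
move=> hm f hf; apply: (sat_map hf); last first.
  by rewrite a1z; last lia; rewrite subrr; exact: ideal0.
gens; first exact: a1g.
- g1 a1x 0%N.
- g1 a1x 1%N.
- g1 a1y 3%N.
- g1 a1y 4%N.
- g1 a1z 2%N.
Qed.

Lemma T1_21 (k : fieldType) (m : nat) : (5 <= m)%N ->
  forall f, I2 f -> I1 (alg_map (@phi1_img k m) f).
Proof.
move=> hm f hf; apply: (sat_map hf); last first.
  by rewrite a1y; last lia; rewrite subrr; exact: ideal0.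
gens; first exact: a1g.
- g1 a1x 0%N.
- g1 a1x 1%N.
- g1 a1y 4%N.
- g1 a1z 2%N.
- g1 a1z 3%N.
Qed.

Lemma T1_33 (k : fieldType) (m : nat) : (2 \in [pchar k])%N -> (5 <= m)%N ->
  forall f, I3 f -> I3 (alg_map (@phi1_img k m) f).
Proof.
move=> h2 hm f hf; apply: (sat_map hf); last first.
  by rewrite a1y; last lia; rewrite oppx // addrC; gen 4%N.
gens; first exact: a1g.
- g1 a1x 0%N.
- g1 a1x 1%N.
- g1 a1y 3%N.
- g1 a1z 2%N.
- rewrite alg_mapD a1y; last lia; rewrite a1z; last lia.
  by rewrite addrC; gen 4%N.
Qed.

Lemma T2_00 (k : fieldType) (m : nat) : (2 \in [pchar k])%N -> (5 <= m)%N ->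
  forall f, I0 f -> I0 (alg_map (@phi2_img k m) f).
Proof.
move=> h2 hm f hf; apply: (ideal_map hf); gens; first by move=> j; exact: a2g.
- g1 a2x 0%N.
- g1 a2x 1%N.
- g1 a2x 2%N.
- g1 a2y 3%N.
- g1 a2y 4%N.
- rewrite a2z; last lia; gsum3 0%N 3%N 5%N.
- rewrite a2z; last lia; gsum3 1%N 4%N 6%N.
Qed.

Lemma T2_11 (k : fieldType) (m : nat) : (2 \in [pchar k])%N -> (5 <= m)%N ->
  forall f, I1 f -> I1 (alg_map (@phi2_img k m) f).
Proof.
move=> h2 hm f hf; apply: (sat_map hf); last first.
  by rewrite a2z; last lia; rewrite addrK; gsum2 1%N 3%N.
gens; first by move=> j; exact: a2g.
- g1 a2x 0%N.
- g1 a2x 1%N.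
- g1 a2y 2%N.
- g1 a2y 3%N.
- rewrite a2z; last lia; gsum3 0%N 2%N 4%N.
Qed.

Lemma T2_23 (k : fieldType) (m : nat) : (2 \in [pchar k])%N -> (5 <= m)%N ->
  forall f, I2 f -> I3 (alg_map (@phi2_img k m) f).
Proof.
move=> h2 hm f hf; apply: (sat_map hf); last first.
  by rewrite a2y; last lia; rewrite subrr; exact: ideal0.
gens; first by move=> j; exact: a2g.
- g1 a2x 0%N.
- g1 a2x 1%N.
- g1 a2y 2%N.
- rewrite a2z; last lia; gsum3 0%N 2%N 3%N.
- rewrite a2z; last lia; rewrite -addrA; gsum2 1%N 4%N.
Qed.

Lemma T2_32 (k : fieldType) (m : nat) : (2 \in [pchar k])%N -> (5 <= m)%N ->
  forall f, I3 f -> I2 (alg_map (@phi2_img k m) f).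
Proof.
move=> h2 hm f hf; apply: (sat_map hf); last first.
  by rewrite a2y; last lia; rewrite subrr; exact: ideal0.
gens; first by move=> j; exact: a2g.
- g1 a2x 0%N.
- g1 a2x 1%N.
- g1 a2y 2%N.
- rewrite a2z; last lia; gsum3 0%N 2%N 3%N.
- rewrite alg_mapD a2y; last lia; rewrite a2z; last lia.
  have -> : yv k m 1 + (xv k m 1 + yv k m 1 + zv k m 1) =
     xv k m 1 + zv k m 1 + (yv k m 1 + yv k m 1) by ring.
  rewrite addxx // addr0; gsum2 1%N 4%N.
Qed.

Lemma inv_gen (k : fieldType) (m : nat) (img : 'I_(nv m) -> Rm k m) :
  (forall j, alg_map img (img j) = 'X_j) -> forall p, spec_map img (spec_map img p) = p.
Proof.
move=> H p; apply: functional_extensionality => j.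
by rewrite {1}/spec_map eval_spec H mevalXU.
Qed.

Lemma inv1 (k : fieldType) (m : nat) (p : point k m) : psi1 (psi1 p) = p.
Proof.
apply: inv_gen => j; have [hb [hi ->]] := var_dec j.
move: (vblock j) (vpos j) hb hi => b i hb hi.
have [eb ei] := blk_gen hb hi.
rewrite [phi1_img k _]/phi1_img eb.
case: b hb hi eb ei => [|[|[|b]]] // hb hi eb ei.
- by rewrite alg_mapX /phi1_img eb.
- by rewrite ei a1z // /yv mul1n.
- by rewrite ei a1y.
Qed.

Lemma inv2 (k : fieldType) (m : nat) (p : point k m) : (2 \in [pchar k])%N -> psi2 (psi2 p) = p.
Proof.
move=> h2; apply: inv_gen => j; have [hb [hi ->]] := var_dec j.
move: (vblock j) (vpos j) hb hi => b i hb hi.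
have [eb ei] := blk_gen hb hi.
rewrite [phi2_img k _]/phi2_img eb.
case: b hb hi eb ei => [|[|[|b]]] // hb hi eb ei.
- by rewrite alg_mapX /phi2_img eb.
- by rewrite alg_mapX /phi2_img eb.
- rewrite ei !alg_mapD a2x // a2y // a2z //.
  have -> : xv k m i + yv k m i + (xv k m i + yv k m i + zv k m i) =
     zv k m i + (xv k m i + xv k m i) + (yv k m i + yv k m i) by ring.
  by rewrite !addxx // !addr0.
Qed.

Unset Implicit Arguments.

Theorem lemma4p11 (k : closedFieldType) (m : nat) :
  (2 \in [pchar k])%N -> (5 <= m)%N ->
  (same_set (image_set (@psi1 k m) (@Z0 k m)) (@Z0 k m)
   /\ same_set (image_set (@psi1 k m) (@Z1 k m)) (@Z2 k m)
   /\ same_set (image_set (@psi1 k m) (@Z2 k m)) (@Z1 k m)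
   /\ same_set (image_set (@psi1 k m) (@Z3 k m)) (@Z3 k m))
  /\
  (same_set (image_set (@psi2 k m) (@Z0 k m)) (@Z0 k m)
   /\ same_set (image_set (@psi2 k m) (@Z1 k m)) (@Z1 k m)
   /\ same_set (image_set (@psi2 k m) (@Z2 k m)) (@Z3 k m)
   /\ same_set (image_set (@psi2 k m) (@Z3 k m)) (@Z2 k m)).
Proof.
move=> h2 hm.
have i1 := @inv1 k m; have i2 : forall p : point k m, psi2 (psi2 p) = p by move=> p; apply: (@inv2 k m p h2).
split; (split; [|split; [|split]]).
- by apply: transfer => //; apply: T1_00.
- by apply: transfer => //; [apply: T1_12 | apply: T1_21].
- by apply: transfer => //; [apply: T1_21 | apply: T1_12].
- by apply: transfer => //; apply: T1_33.
- by apply: transfer => //; apply: T2_00.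
- by apply: transfer => //; apply: T2_11.
- by apply: transfer => //; [apply: T2_23 | apply: T2_32].
- by apply: transfer => //; [apply: T2_32 | apply: T2_23].
Qed.
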